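(* Let $g\in\mathbb{Z}^+$, $\ell\in\mathbb{Z}_{\ge0}$, $\vec i\le\vec j$ in $\mathbb{Z}^d$ and $k\in\{1,\dots,\lfloor\ell/g\rfloor\}$. Then (i) $\mathcal{O}^k\big(\mathcal{B}^\ell[\vec i:\vec j],-g,\mathfrak{B}\big)=\mathcal{B}^{\ell-gk}\big[L^k(\vec i):R^k(\vec j)\big]$, where $L(\vec i)=D_0^g(\vec i)-p$ and $R(\vec i)=D_0^g(\vec i+p)$; (ii) for every $\varphi\in\mathfrak{B}$ with $\ell_\varphi=\ell$, $\mathcal{O}^k(\varphi,-g,\mathfrak{B})\subset\{\psi\in\mathfrak{B}:\ell_\psi=\ell-gk,\ \|\rho(\varphi,\psi)\|_\infty\le C\}$ with $C=p\,n^g\frac{1-n^{-kg}}{n^g-1}+1\le\frac{pn^g}{n^g-1}+1$; (iii) $\#\mathcal{O}^k(\varphi,-g,\mathfrak{B})\le(2C+1)^d$.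
   Context: Fix integers $d\ge1$, $n\ge2$, $m\ge2$; $s=n-1$, $p=m-1$. Vector inequalities/floors componentwise; $[\vec i:\vec j]=\{\vec k\in\mathbb{Z}^d:\vec i\le\vec k\le\vec j\}$. $D_c(\vec i)=\lfloor(\vec i-c)/n\rfloor$ and $D_c^k$ its $k$-fold iterate. B-splines: $Q$ is the uniform B-spline of order $m$ with knots $0,\dots,m$, $\varphi^\ell_{\vec i}(\vec x)=\prod_kQ(n^\ell x_k-i_k)$ ($\ell\ge0$, $\vec i\in\mathbb{Z}^d$), $\mathfrak{B}$ the set of all of them, $\ell_\varphi,\vec i_\varphi$ level and index, $\mathcal{B}^\ell[\vec i:\vec j]=\{\varphi^\ell_{\vec k}:\vec k\in[\vec i:\vec j]\}$. Cells: $I^\ell_{\vec i}=\prod_k[i_kn^{-\ell},(i_k+1)n^{-\ell})$, $\mathcal{I}^\ell[\vec i:\vec j]$ the corresponding box of cells; cell children $\mathrm{ch}(I^\ell_{\vec i})=\mathcal{I}^{\ell+1}[n\vec i:n\vec i+s]$, $\mathrm{ch}^k$ the $k$-fold application, $\mathrm{ch}^{-k}(I)=\{J:I\in\mathrm{ch}^k(J)\}$ (unions over sets). Cell support $\mathbb{I}(\varphi^\ell_{\vec i})=\mathcal{I}^\ell[\vec i:\vec i+p]$, $\mathbb{I}^k(\varphi)=\mathrm{ch}^k(\mathbb{I}(\varphi))$ for $k\in\mathbb{Z}$; $\mathbb{B}^k(I)=\{\varphi\in\mathfrak{B}:I\in\mathbb{I}^{-k}(\varphi)\}$; all extended to sets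 by union. For $\mathcal{F},\mathcal{H}\subset\mathfrak{B}$, $j\in\mathbb{Z}$: $\mathcal{O}(\mathcal{F},j,\mathcal{H})=\mathbb{B}^j(\mathbb{I}(\mathcal{F}))\cap\mathcal{H}$, $\mathcal{O}(\varphi,j,\mathcal{H})=\mathcal{O}(\{\varphi\},j,\mathcal{H})$, and $\mathcal{O}^{k+1}(\mathcal{F},j,\mathcal{H})=\mathcal{O}(\mathcal{O}^k(\mathcal{F},j,\mathcal{H}),j,\mathcal{H})$. $\rho(\varphi_1,\varphi_2)=\vec i_{\varphi_1}n^{-(\ell_{\varphi_1}-\ell_{\varphi_2})}-\vec i_{\varphi_2}$, and $\|\cdot\|_\infty$ is the max of absolute values of components. *)

(* Defs.v *)
From HB Require Import structures.
From mathcomp Require Import all_boot all_order all_algebra.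
Set Implicit Arguments. Unset Strict Implicit. Unset Printing Implicit Defensive.
Import Order.TTheory GRing.Theory Num.Theory.
Local Open Scope ring_scope.

Definition vec (d : nat) := {ffun 'I_d -> int}.

Definition vle d (u v : vec d) : Prop := forall t, u t <= v t.
Definition vaddc d (u : vec d) (c : int) : vec d := [ffun t => u t + c].
Definition vscale d (c : int) (u : vec d) : vec d := [ffun t => c * u t].
(* D_c(i) = floor((i - c)/n), componentwise; (_ %/ _)%Z is floor division for n > 0 *)
Definition Dc (n : nat) (c : int) d (u : vec d) : vec d :=
  [ffun t => ((u t - c) %/ (n%:Z))%Z].

Definition pset (T : Type) := T -> Prop.

(* B-spline phi^l_i is represented by its (level, index) pair (l, i), l >= 0. *)
Definition bspline (d : nat) := (nat * vec d)%type.
(* A cell I^l_i is represented by its (level, index) pair. *)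
Definition cell (d : nat) := (int * vec d)%type.

Definition Bbox d (l : nat) (i j : vec d) : pset (bspline d) :=
  fun phi => phi.1 = l /\ vle i phi.2 /\ vle phi.2 j.

Definition ch (n : nat) d (I : cell d) : pset (cell d) :=
  fun J => J.1 = I.1 + 1 /\ vle (vscale n%:Z I.2) J.2
           /\ vle J.2 (vaddc (vscale n%:Z I.2) (n.-1)%:Z).

Definition chS (n : nat) d (S : pset (cell d)) : pset (cell d) :=
  fun J => exists I, S I /\ ch n I J.
Definition chn (n : nat) d (k : nat) (S : pset (cell d)) : pset (cell d) :=
  iter k (@chS n d) S.

Definition chZ (n : nat) d (k : int) (S : pset (cell d)) : pset (cell d) :=
  match k with
  | Posz k' => chn n k' S
  | Negz k' => fun J => exists I, S I /\ chn n k'.+1 (fun J' => J' = J) I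
  end.

(* cell support I(phi^l_i) = I^l[i : i + p], p = m - 1 *)
Definition Isupp (m : nat) d (phi : bspline d) : pset (cell d) :=
  fun I => I.1 = (phi.1)%:Z /\ vle phi.2 I.2 /\ vle I.2 (vaddc phi.2 (m.-1)%:Z).

Definition IsuppSet (m : nat) d (F : pset (bspline d)) : pset (cell d) :=
  fun I => exists phi, F phi /\ Isupp m phi I.

Definition IsuppK (n m : nat) d (k : int) (phi : bspline d) : pset (cell d) :=
  chZ n k (Isupp m phi).

Definition BB (n m : nat) d (k : int) (I : cell d) : pset (bspline d) :=
  fun phi => IsuppK n m (- k) phi I.
Definition BBset (n m : nat) d (k : int) (S : pset (cell d)) : pset (bspline d) :=
  fun phi => exists I, S I /\ BB n m k I phi.

Definition O (n m : nat) d (F : pset (bspline d)) (j : int) (H : pset (bspline d))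
  : pset (bspline d) :=
  fun phi => BBset n m j (IsuppSet m F) phi /\ H phi.

Definition Oiter (n m : nat) d (k : nat) (F : pset (bspline d)) (j : int)
  (H : pset (bspline d)) : pset (bspline d) :=
  iter k (fun G => O n m G j H) F.

Definition allB d : pset (bspline d) := fun _ => True.

Definition rho (n : nat) d (phi1 phi2 : bspline d) : 'I_d -> rat :=
  fun t => (phi1.2 t)%:~R * (n%:R : rat) ^ (- ((phi1.1)%:Z - (phi2.1)%:Z))
           - (phi2.2 t)%:~R.

Definition norm_inf d (v : 'I_d -> rat) : rat := \big[Num.max/0]_(t < d) `|v t|.

Definition Lmap (n m g : nat) d (u : vec d) : vec d :=
  vaddc (iter g (@Dc n 0 d) u) (- (m.-1)%:Z).
Definition Rmap (n m g : nat) d (u : vec d) : vec d :=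
  iter g (@Dc n 0 d) (vaddc u (m.-1)%:Z).

Definition Cbound (n m g k : nat) : rat :=
  (m.-1)%:R * (n%:R) ^+ g * (1 - (n%:R : rat) ^ (- (k * g)%N%:Z)) / ((n%:R) ^+ g - 1) + 1.

(* Main.v *)
Require Import Defs.
From HB Require Import structures.
From mathcomp Require Import all_boot all_order all_algebra.
From mathcomp Require zify.
From Stdlib Require Import Lia.
From mathcomp Require Import ring lra.
Import Order.TTheory GRing.Theory Num.Theory.
Set Implicit Arguments. Unset Strict Implicit. Unset Printing Implicit Defensive.
Local Open Scope ring_scope.

Definition cbox d (L:int) (u v : vec d) : pset (cell d) :=
  fun J => J.1 = L /\ vle u J.2 /\ vle J.2 v.

Lemma chn_cbox n (hn : (0 < n)%N) d t (L : int) (u v : vec d) (J : cell d) :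
  chn n t (cbox L u v) J <->
  (J.1 = L + t%:Z /\ forall s, (n%:Z)^+t * u s <= J.2 s /\ J.2 s <= (n%:Z)^+t * v s + (n%:Z)^+t - 1).
Proof.
elim: t J => [|t IH] J.
  rewrite /chn /= /cbox /vle addr0 expr0; split.
    by case=> -> [h1 h2]; split=> // s; rewrite !mul1r addrK.
  by case=> -> h; split=> //; split=> s; have := h s; rewrite !mul1r addrK; case.
rewrite /chn iterS -/(chn n t _) /chS.
have hn0 : (0 < n%:Z) by rewrite ltz_nat.
set M := (n%:Z)^+t.
have hM : 0 < M by rewrite exprn_gt0.
rewrite exprSr -/M.
split.
  case=> I [/IH [hI1 hI] [hJ1 [hJ2 hJ3]]]; split.
    by rewrite hJ1 hI1; lia.
  move=> s; have := hI s; have := hJ2 s; have := hJ3 s.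
  rewrite !ffunE /=.
  have -> : (n.-1)%:Z = n%:Z - 1 by lia.
  move=> h1 h2 [h3 h4]; split; nia.
case=> hJ1 hJ; exists (L + t%:Z, [ffun s => ((J.2 s) %/ n%:Z)%Z]); split.
  apply/IH; split=> // s; rewrite ffunE; have [h1 h2] := hJ s; split.
    by rewrite lez_divRL //; lia.
  rewrite -ltzD1 ltz_divLR //; nia.
split; first by rewrite hJ1 /=; lia.
have -> : (n.-1)%:Z = n%:Z - 1 by lia.
split=> s; rewrite !ffunE /=.
  by rewrite mulrC lez_floor // gt_eqF.
have := ltz_ceil (J.2 s) hn0; lia.
Qed.
Lemma chZ_pos n d k (S : pset (cell d)) : chZ n (Posz k) S = chn n k S.
Proof. by []. Qed.
Lemma Isupp_cbox m d (phi : bspline d) :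
  Isupp m phi = cbox phi.1%:Z phi.2 (vaddc phi.2 (m.-1)%:Z).
Proof. by []. Qed.

Lemma IsuppSet_Bbox m d L (i j : vec d) (hij : vle i j) I :
  IsuppSet m (Bbox L i j) I <-> cbox L%:Z i (vaddc j (m.-1)%:Z) I.
Proof.
split.
  case=> phi [[h1 [h2 h3]] [h4 [h5 h6]]]; split; first by rewrite h4 h1.
  split=> s; first by have := h2 s; have := h5 s; lia.
  by have := h3 s; have := h6 s; rewrite !ffunE; lia.
case=> h1 [h2 h3].
exists (L, [ffun s => Num.max (i s) (I.2 s - (m.-1)%:Z)]).
split; [split=> //; split=> s; rewrite ffunE|split=> //; split=> s; rewrite ffunE].
- by rewrite le_max lexx.
- have := hij s; have := h3 s; rewrite ffunE ge_max => ??; apply/andP; split; lia.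
- have := h2 s; rewrite ge_max => ?; apply/andP; split; lia.
- by rewrite ffunE -lerBlDr le_max lexx orbT.
Qed.

Lemma Ostep n m (hn : (0 < n)%N) d (g L : nat) (i j : vec d) (hij : vle i j) (psi : bspline d) :
  O n m (Bbox L i j) (- g%:Z) (@allB d) psi <->
  ((psi.1 + g)%N = L /\ forall s, (n%:Z)^+g * psi.2 s <= j s + (m.-1)%:Z
       /\ i s < (n%:Z)^+g * (psi.2 s + (m.-1)%:Z + 1)).
Proof.
rewrite /O /BBset /BB /IsuppK opprK chZ_pos Isupp_cbox.
have hM : 0 < (n%:Z)^+g by rewrite exprn_gt0 // ltz_nat.
set M := (n%:Z)^+g in hM *.
split.
  case=> [[I [/IsuppSet_Bbox-/(_ hij) [h1 [h2 h3]] /chn_cbox-/(_ hn) [h4 h5]]] _].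
  split; first by move: h4; rewrite h1; lia.
  move=> s; have := h2 s; have := h3 s; have := h5 s; rewrite !ffunE -/M; lia.
case=> h1 h2; split=> //.
exists (L%:Z, [ffun s => Num.max (i s) (M * psi.2 s)]); split.
  apply/IsuppSet_Bbox => //; split=> //; split=> s; rewrite !ffunE.
    by rewrite le_max lexx.
  have := hij s; have := h2 s; rewrite ge_max => -[? ?] ?; apply/andP; split; lia.
apply/chn_cbox => //; split; first by rewrite /=; lia.
move=> s; rewrite !ffunE -/M; have := h2 s; case=> ? ?; split.
  by rewrite le_max lexx orbT.
rewrite ge_max; apply/andP; split; nia.
Qed.

Definition Ds (n:nat) (z:int) : int := ((z - 0) %/ n%:Z)%Z.
Lemma iterD_ge n (hn : (0 < n)%N) g : forall a z,
  (a <= iter g (Ds n) z) = ((n%:Z)^+g * a <= z).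
Proof.
elim: g => [|g IH] a z /=; first by rewrite expr0 mul1r.
rewrite /Ds subr0 lez_divRL; last by rewrite ltz_nat.
by rewrite IH exprSr [a * _]mulrC mulrA.
Qed.
Lemma iterD_lt n (hn : (0 < n)%N) g : forall b z,
  (iter g (Ds n) z < b) = (z < (n%:Z)^+g * b).
Proof.
elim: g => [|g IH] b z /=; first by rewrite expr0 mul1r.
rewrite /Ds subr0 ltz_divLR; last by rewrite ltz_nat.
by rewrite IH exprSr [b * _]mulrC mulrA.
Qed.
Lemma iterDc n d g (u : vec d) s : (iter g (@Dc n 0 d) u) s = iter g (Ds n) (u s).
Proof. by elim: g => [|g IH] //=; rewrite ffunE IH. Qed.

Lemma Lmap_le n m (hn : (0 < n)%N) d g (i : vec d) s a :
  (Lmap n m g i s <= a) = (i s < (n%:Z)^+g * (a + (m.-1)%:Z + 1)).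
Proof. by rewrite /Lmap ffunE iterDc lerBlDr -ltzD1 iterD_lt. Qed.
Lemma Rmap_ge n m (hn : (0 < n)%N) d g (j : vec d) s a :
  (a <= Rmap n m g j s) = ((n%:Z)^+g * a <= j s + (m.-1)%:Z).
Proof. by rewrite /Rmap iterDc ffunE iterD_ge. Qed.

Lemma Ostep2 n m (hn : (0 < n)%N) d (g L : nat) (i j : vec d) (hij : vle i j)
  (hgL : (g <= L)%N) (psi : bspline d) :
  O n m (Bbox L i j) (- g%:Z) (@allB d) psi <->
  Bbox (L - g) (Lmap n m g i) (Rmap n m g j) psi.
Proof.
rewrite Ostep //; split.
  case=> h1 h2; split; first lia.
  by split=> s; [rewrite Lmap_le|rewrite Rmap_ge]; case: (h2 s).
case=> h1 [h2 h3]; split; first lia.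
by move=> s; have := h2 s; have := h3 s; rewrite Lmap_le ?Rmap_ge...
Qed.

Lemma LR_mono n m (hn : (0 < n)%N) d g (i j : vec d) : vle i j ->
  vle (Lmap n m g i) (Rmap n m g j).
Proof.
move=> hij s; rewrite Lmap_le //.
have hM : 0 < (n%:Z)^+g by rewrite exprn_gt0 // ltz_nat.
have : (n%:Z)^+g * Rmap n m g j s <= j s + (m.-1)%:Z by rewrite -Rmap_ge //.
have : j s + (m.-1)%:Z < (n%:Z)^+g * (Rmap n m g j s + 1).
  by rewrite -iterD_lt // /Rmap iterDc ffunE ltzD1.
have := hij s; nia.
Qed.

Fixpoint Us (M : int) (k : nat) : int := if k is k'.+1 then Us M k' + M^+k' else 0.
Lemma Us_ge0 M k : 0 <= M -> 0 <= Us M k.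
Proof. move=> hM; elim: k => //= k IH; have := exprn_ge0 k hM; lia. Qed.
Lemma Us_id M k : Us M k * (M - 1) = M^+k - 1.
Proof.
elim: k => [|k IH] /=; first by rewrite mul0r expr0 subrr.
rewrite mulrDl IH exprSr; set P := M^+k; lia.
Qed.

Lemma R_bound n m (hn : (0 < n)%N) d g (u : vec d) s k :
  ((n%:Z)^+g)^+k * iter k (@Rmap n m g d) u s <= u s + (m.-1)%:Z * Us ((n%:Z)^+g) k.
Proof.
have hM : 0 < (n%:Z)^+g by rewrite exprn_gt0 // ltz_nat.
set M := (n%:Z)^+g in hM *.
elim: k => [|k IH] /=; first by rewrite expr0 mul1r mulr0 addr0.
have h : M * Rmap n m g (iter k (@Rmap n m g d) u) s <= iter k (@Rmap n m g d) u s + (m.-1)%:Z.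
  by rewrite -Rmap_ge.
have hP : 0 <= M^+k by rewrite exprn_ge0 // ltW.
move: h IH hP; rewrite exprSr /=.
set P := M^+k; set y := iter k _ u s; set y' := Rmap _ _ _ _ s; set U := Us M k.
nia.
Qed.

Lemma L_bound n m (hn : (0 < n)%N) d g (u : vec d) s k :
  u s - ((n%:Z)^+g)^+k * iter k (@Lmap n m g d) u s
    <= (m.-1)%:Z * (n%:Z)^+g * Us ((n%:Z)^+g) k + ((n%:Z)^+g)^+k - 1.
Proof.
have hM : 0 < (n%:Z)^+g by rewrite exprn_gt0 // ltz_nat.
set M := (n%:Z)^+g in hM *.
elim: k => [|k IH] /=; first by rewrite expr0 mul1r mulr0 add0r subrr subrr.
have h : iter k (@Lmap n m g d) u s < M * (Lmap n m g (iter k (@Lmap n m g d) u) s + (m.-1)%:Z + 1).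
  by rewrite -Lmap_le.
have hP : 0 <= M^+k by rewrite exprn_ge0 // ltW.
move: h IH hP; rewrite exprSr /=.
set P := M^+k; set y := iter k _ u s; set y' := Lmap _ _ _ _ s; set U := Us M k.
nia.
Qed.

Lemma iter_vle n m (hn : (0 < n)%N) d g (i j : vec d) k : vle i j ->
  vle (iter k (@Lmap n m g d) i) (iter k (@Rmap n m g d) j).
Proof. by move=> hij; elim: k => //= k IH; apply: LR_mono. Qed.

Lemma O_ext n m d (F F' : pset (bspline d)) j H :
  (forall x, F x <-> F' x) -> forall psi, O n m F j H psi <-> O n m F' j H psi.
Proof.
move=> hF psi; split; case=> [[I [[phi [h1 h2]] h3]] h4]; split=> //;
  exists I; split=> //; exists phi; split=> //; by apply/hF.
Qed.

Lemma Oiter_ext n m d k (F F' : pset (bspline d)) j H :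
  (forall x, F x <-> F' x) -> forall psi, Oiter n m k F j H psi <-> Oiter n m k F' j H psi.
Proof.
move=> hF; elim: k => [|k IH] psi /=; first exact: hF.
exact: O_ext.
Qed.

Lemma Oiter_Bbox n m (hn : (0 < n)%N) d (g l : nat) (i j : vec d) (hij : vle i j) k
  (hk : (g * k <= l)%N) (psi : bspline d) :
  Oiter n m k (Bbox l i j) (- g%:Z) (@allB d) psi <->
  Bbox (l - g * k) (iter k (@Lmap n m g d) i) (iter k (@Rmap n m g d) j) psi.
Proof.
elim: k hk psi => [|k IH] hk psi; first by rewrite /= muln0 subn0.
rewrite /Oiter iterS -/(Oiter n m k _ _ _).
rewrite (@O_ext n m d _ _ _ _ (IH _)); last by rewrite mulnS in hk; lia.
rewrite Ostep2 //; last by rewrite mulnS in hk; lia.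
  by have -> : (l - g * k - g = l - g * k.+1)%N by rewrite mulnS; lia.
exact: iter_vle.
Qed.

Lemma rat_abs (a b p M U P : rat) (hP : 0 < P) (hM : 1 <= M) (hp : 0 <= p) (hU : 0 <= U)
  (h1 : P * b <= a + p * U) (h2 : a - P * b <= p * M * U + P - 1) :
  `|a / P - b| <= p * M * U / P + 1.
Proof.
have hP0 : P != 0 by rewrite gt_eqF.
have e1 : a / P - b = (a - P * b) / P by field.
have e2 : p * M * U / P + 1 = (p * M * U + P) / P by field.
have hpU : p * U <= p * M * U by have := mulr_ge0 hp hU; nra.
rewrite e1 e2 ler_norml -mulNr !ler_pM2r ?invr_gt0 //.
apply/andP; split; lra.
Qed.
Lemma rat_diff (a X Y p M U P : rat) (hP : 0 < P) (hM : 1 <= M) (hp : 0 <= p) (hU : 0 <= U)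
  (h1 : P * Y <= a + p * U) (h2 : a - P * X <= p * M * U + P - 1) :
  Y - X <= 2 * (p * M * U / P + 1).
Proof.
have hP0 : P != 0 by rewrite gt_eqF.
have e1 : Y - X = (P * Y - P * X) / P by field.
have e2 : 2 * (p * M * U / P + 1) = (2 * p * M * U + 2 * P) / P by field.
have hpU : p * U <= p * M * U by have := mulr_ge0 hp hU; nra.
rewrite e1 e2 ler_pM2r ?invr_gt0 //; lra.
Qed.

Lemma int_rat (x y : int) : x <= y -> x%:~R <= y%:~R :> rat.
Proof. by rewrite ler_int. Qed.

Lemma intrX' (x : int) k : (x ^+ k)%:~R = (x%:~R : rat) ^+ k.
Proof. by elim: k => [|k IH]; rewrite ?expr0 // !exprS intrM IH. Qed.

Lemma Cbound_eq n m g k (hn : (2 <= n)%N) (hg : (0 < g)%N) :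
  Cbound n m g k = ((m.-1)%:Z * (n%:Z)^+g * Us ((n%:Z)^+g) k)%:~R / (((n%:Z)^+g)^+k)%:~R + 1.
Proof.
have eU := congr1 (fun z : int => z%:~R : rat) (Us_id ((n%:Z)^+g) k).
move: eU; rewrite /= /Cbound -exprnN !intrM !intrB !intrX'.
have -> : ((m.-1)%:Z)%:~R = (m.-1)%:R :> rat by [].
have -> : ((n%:Z)%:~R) = n%:R :> rat by [].
rewrite mulnC exprM.
set Mr := (n%:R : rat)^+g; set Ur := (Us _ k)%:~R => eU.
have hMr : 1 < Mr by rewrite exprn_egt1 ?ltr1n // -lt0n.
have hP : 0 < Mr^+k by rewrite exprn_gt0 // (lt_trans ltr01).
have hP0 : Mr^+k != 0 by rewrite gt_eqF.
have hM0 : Mr - 1 != 0 by rewrite subr_eq0 gt_eqF.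
have e : 1 - (Mr^+k)^-1 = Ur * (Mr - 1) / Mr^+k.
  by rewrite eU; field.
rewrite e; congr (_ + _); field.
by rewrite hM0 hP0.
Qed.

Lemma phi_Bbox d (phi : bspline d) (x : bspline d) :
  x = phi <-> Bbox phi.1 phi.2 phi.2 x.
Proof.
case: phi => l a; case: x => l' b; rewrite /Bbox /=; split.
  by case=> -> ->; split=> //; split=> s.
case=> -> [h1 h2]; congr pair; apply/ffunP=> s; apply/le_anti.
by rewrite h1 h2.
Qed.

Theorem lemma3p16 (d n m : nat) (hd : (1 <= d)%N) (hn : (2 <= n)%N) (hm : (2 <= m)%N)
  (g l : nat) (hg : (0 < g)%N) (i j : vec d) (hij : vle i j)
  (k : nat) (hk1 : (1 <= k)%N) (hk2 : (k <= l %/ g)%N) :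
  (* (i) *)
  (forall psi : bspline d,
     Oiter n m k (Bbox l i j) (- g%:Z) (@allB d) psi <->
     Bbox (l - g * k)%N (iter k (@Lmap n m g d) i) (iter k (@Rmap n m g d) j) psi) /\
  (* (ii) *)
  (forall phi : bspline d, phi.1 = l ->
     (forall psi : bspline d,
        Oiter n m k (fun x => x = phi) (- g%:Z) (@allB d) psi ->
        psi.1 = (l - g * k)%N /\ norm_inf (rho n phi psi) <= Cbound n m g k)) /\
  Cbound n m g k <= (m.-1)%:R * (n%:R) ^+ g / ((n%:R) ^+ g - 1) + 1 /\
  (* (iii) *)
  (forall phi : bspline d, phi.1 = l ->
     forall s : seq (bspline d), uniq s ->
       (forall psi, psi \in s -> Oiter n m k (fun x => x = phi) (- g%:Z) (@allB d) psi) ->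
       (size s)%:R <= (2 * Cbound n m g k + 1) ^+ d).
Proof.
have hn0 : (0 < n)%N by lia.
have hgk : (g * k <= l)%N by move: hk2; rewrite leq_divRL //; lia.
have key : forall phi : bspline d, phi.1 = l -> forall psi,
    Oiter n m k (fun x => x = phi) (- g%:Z) (@allB d) psi ->
    psi.1 = (l - g * k)%N /\ forall s,
      iter k (@Lmap n m g d) phi.2 s <= psi.2 s <= iter k (@Rmap n m g d) phi.2 s.
  move=> phi hphi psi.
  rewrite (@Oiter_ext n m d k _ (Bbox l phi.2 phi.2)); last by move=> x; rewrite phi_Bbox hphi.
  rewrite Oiter_Bbox //; case=> h1 [h2 h3]; split=> // s.
  by rewrite h2 h3.
set M := (n%:Z)^+g.
have hM : 1 < M by rewrite exprn_egt1; lia.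
set P := M^+k.
have hP : 0 < P by rewrite exprn_gt0 // (lt_trans ltr01).
set U := Us M k.
have hU : 0 <= U by apply: Us_ge0; apply: ltW; apply: lt_trans hM.
set p := (m.-1)%:Z.
have hp : 0 <= p by [].
have hMr : 1 <= M%:~R :> rat by rewrite ler1z ltW.
have hPr : 0 < P%:~R :> rat by rewrite ltr0z.
have hUr : 0 <= U%:~R :> rat by rewrite ler0z.
have hpr : 0 <= p%:~R :> rat by rewrite ler0z.
have eC := Cbound_eq m k hn hg; rewrite -/M -/P -/U -/p !intrM in eC.
have hC : 0 <= Cbound n m g k.
  rewrite eC; apply: addr_ge0 => //; apply: divr_ge0; last exact: ltW.
  by apply: mulr_ge0 => //; apply: mulr_ge0 => //; apply: le_trans hMr.
split; first by move=> psi; apply: Oiter_Bbox.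
split.
  move=> phi hphi psi /(key _ hphi) [h1 h2]; split=> //.
  rewrite /norm_inf; apply: (big_ind (fun x => x <= Cbound n m g k)) => //.
    by move=> x y hx hy; rewrite ge_max hx hy.
  move=> t _; rewrite /rho hphi h1.
  have -> : (- (l%:Z - (l - g * k)%N%:Z)) = - ((k * g)%N%:Z) by lia.
  rewrite -exprnN mulnC exprM.
  have -> : (n%:R : rat) ^+ g = M%:~R by rewrite /M intrX'.
  rewrite -intrX' -/P eC.
  have hR := R_bound m hn0 g phi.2 t k; rewrite -/M -/P -/U -/p in hR.
  have hL := L_bound m hn0 g phi.2 t k; rewrite -/M -/P -/U -/p in hL.
  have [hb1 hb2] := andP (h2 t).
  apply: rat_abs => //.
    have := int_rat (le_trans (ler_wpM2l (ltW hP) hb2) hR).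
    by rewrite !intrD !intrM.
  have : phi.2 t - P * psi.2 t <= p * M * U + P - 1.
    have := ler_wpM2l (ltW hP) hb1; move: hL; lia.
  by move/int_rat; rewrite ?intrD ?intrB ?intrN ?intrM.
split.
  rewrite /Cbound lerD2r mulrAC ler_piMr //.
    have hMr' : 1 < (n%:R : rat)^+g by rewrite exprn_egt1 ?ltr1n // -lt0n.
    apply: divr_ge0; first by apply: mulr_ge0 => //; apply: exprn_ge0.
    by rewrite subr_ge0 ltW.
  by rewrite -exprnN gerBl invr_ge0 exprn_ge0.
move=> phi hphi s hu hs.
set X := iter k (@Lmap n m g d) phi.2.
set Y := iter k (@Rmap n m g d) phi.2.
set W := (\max_(t < d) `|Y t - X t|%N)%N.
have hb : forall psi, psi \in s -> psi.1 = (l - g * k)%N /\ forall t, X t <= psi.2 t <= Y t.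
  by move=> psi /hs /(key _ hphi).
have hW : forall t, (`|Y t - X t| <= W)%N.
  by move=> t; apply: (@leq_bigmax _ (fun t => `|Y t - X t|%N)).
pose f := fun psi : bspline d => [ffun t => (inord (`|psi.2 t - X t|%N) : 'I_W.+1)].
have finj : {in s &, injective f}.
  move=> x y hx hy /ffunP hxy.
  have [hx1 hx2] := hb x hx; have [hy1 hy2] := hb y hy.
  have e2 : forall t, x.2 t = y.2 t.
    move=> t; have := hxy t; rewrite !ffunE => /(congr1 (@nat_of_ord _)).
    have := hx2 t; have := hy2 t; have := hW t.
    move=> hWt /andP [hy3 hy4] /andP [hx3 hx4].
    have habs : forall z : int, 0 <= z -> ((`|z|%N)%:Z = z).
      by move=> z hz; rewrite abszE ger0_norm.
    have hle : forall z : int, X t <= z <= Y t -> (`|z - X t| < W.+1)%N.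
      move=> z /andP [hz1 hz2]; rewrite ltnS; apply: (leq_trans _ hWt).
      rewrite -lez_nat !habs; lia.
    rewrite !inordK ?hle ?hx3 ?hx4 ?hy3 ?hy4 //.
    move=> /(congr1 Posz); rewrite !habs ?subr_ge0 //; exact: addIr.
  case: x y hx1 hy1 e2 {hx hy hxy hx2 hy2} => [x1 x2] [y1 y2] /= -> -> e2.
  by congr pair; apply/ffunP => t; apply: e2.
have hsz : (size s <= W.+1 ^ d)%N.
  rewrite -(size_map f) -(card_uniqP _).
    by apply: leq_trans (max_card _) _; rewrite card_ffun !card_ord.
  by rewrite map_inj_in_uniq.
apply: le_trans (_ : (W.+1 ^ d)%:R <= _).
  by rewrite ler_nat.
rewrite natrX; apply: lerXn2r; rewrite ?nnegrE //.
  by apply: addr_ge0 => //; apply: mulr_ge0.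
rewrite -natr1 lerD2r.
rewrite /W; apply: (big_ind (fun w : nat => w%:R <= 2 * Cbound n m g k)).
- by apply: mulr_ge0.
- move=> x y hx hy; case: (leqP x y) => h.
    by [].
  by [].
move=> t _.
have hXY : X t <= Y t by apply: iter_vle.
rewrite natr_absz ger0_norm ?subr_ge0 // intrB eC.
have hR := R_bound m hn0 g phi.2 t k; rewrite -/M -/P -/U -/p -/Y in hR.
have hL := L_bound m hn0 g phi.2 t k; rewrite -/M -/P -/U -/p -/X in hL.
apply: (rat_diff (a := (phi.2 t)%:~R)) => //.
  by have := int_rat hR; rewrite !intrD !intrM.
by have := int_rat hL; rewrite ?intrD ?intrB ?intrN ?intrM.
Qed.
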